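(* If $n\equiv 2\pmod 4$, then the graph $2Q_{n-1}$ is $\left(\frac{n(2^n+1)}{2}-2^n,\,1\right)$-distance antimagic. If $n\equiv 1\pmod 4$, then $2Q_{n-1}$ is $\left(\frac{(n+1)(2^n+1)}{2}-2^n,\,1\right)$-closed distance antimagic.
   Context: $Q_m$ is the $m$-dimensional hypercube (vertex set $\mathbb{F}_2^m$, adjacency iff differing in exactly one coordinate), and $2Q_{n-1}$ is the disjoint union of two copies of $Q_{n-1}$, a graph of order $2^n$. For a graph $G$ of order $N$, a set of distances $D$, and a bijection $f:V(G)\to\{1,\dots,N\}$, the weight of $x$ is $w(x)=\sum_{y\in N_D(x)}f(y)$ where $N_D(x)$ is the set of vertices at distance in $D$ from $x$. $f$ is an $(\alpha,\delta)$-$D$-antimagic labeling if the weights are pairwise distinct and $\{w(x)\}$ forms an arithmetic progression starting at $\alpha$ with difference $\delta>0$; a graph is $(\alpha,\delta)$-distance antimagic (resp. $(\alpha,\delta)$-closed distance antimagic) if it admits such a labeling with $D=\{1\}$ (resp. $D=\{0,1\}$). *)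

(* Defs.v *)
From mathcomp Require Import all_boot.
Set Implicit Arguments. Unset Strict Implicit. Unset Printing Implicit Defensive.

Definition hcube_adj (m : nat) (x y : {ffun 'I_m -> bool}) : bool :=
  #|[set i | x i != y i]| == 1.

(* 2Q_m: disjoint union of two copies of Q_m; vertex = (copy index, hypercube vertex). *)
Definition twoQ_vert (m : nat) := (bool * {ffun 'I_m -> bool})%type.
Definition twoQ_adj (m : nat) (u v : twoQ_vert m) : bool :=
  (u.1 == v.1) && hcube_adj u.2 v.2.

(* D-neighbourhoods for D = {1} (open) and D = {0,1} (closed):
   distance 1 = adjacent, distance 0 = equal. *)
Definition open_nbhd (T : finType) (adj : rel T) (x : T) : {set T} :=
  [set y | adj x y].
Definition closed_nbhd (T : finType) (adj : rel T) (x : T) : {set T} :=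
  [set y | (y == x) || adj x y].

Definition weight (T : finType) (N : T -> {set T}) (f : T -> nat) (x : T) : nat :=
  \sum_(y in N x) f y.

Definition labeling (T : finType) (f : T -> nat) : Prop :=
  injective f /\ (forall x, 1 <= f x <= #|T|).

Definition ad_antimagic_labeling (T : finType) (N : T -> {set T})
    (alpha delta : nat) (f : T -> nat) : Prop :=
  labeling f /\ 0 < delta /\
  injective (weight N f) /\
  (forall x, exists2 k, k < #|T| & weight N f x = alpha + k * delta).

Definition distance_antimagic (T : finType) (adj : rel T) (alpha delta : nat) : Prop :=
  exists f : T -> nat, ad_antimagic_labeling (open_nbhd adj) alpha delta f.

Definition closed_distance_antimagic (T : finType) (adj : rel T) (alpha delta : nat) : Prop :=
  exists f : T -> nat, ad_antimagic_labeling (closed_nbhd adj) alpha delta f.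

(* Main.v *)
Require Import Defs.
From mathcomp Require Import all_boot.
From mathcomp Require Import zify.
Set Implicit Arguments. Unset Strict Implicit. Unset Printing Implicit Defensive.

Definition flipx m (i : 'I_m) (x : {ffun 'I_m -> bool}) : {ffun 'I_m -> bool} :=
  [ffun j => if j == i then ~~ x j else x j].
Definition flip m (i : 'I_m) (v : twoQ_vert m) : twoQ_vert m := (v.1, flipx i v.2).

Lemma adj_flip m (v y : twoQ_vert m) :
  twoQ_adj v y = (y \in [set flip i v | i in [set: 'I_m]]).
Proof.
apply/idP/imsetP.
- case/andP => /eqP e1 /cards1P [i0 Hi0]. exists i0; first by rewrite inE.
  case: v y e1 Hi0 => b x [b' y] /= -> Hi0; congr pair.
  apply/ffunP => j; rewrite ffunE.
  have := congr1 (fun S : {set 'I_m} => j \in S) Hi0; rewrite !inE /=.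
  case: (j == i0) => /=; move: (x j) (y j) => [] [] //.
- case=> i _ ->. rewrite /twoQ_adj /= eqxx /=. apply/eqP.
  suff -> : [set j | v.2 j != flipx i v.2 j] = [set i] by rewrite cards1.
  apply/setP=> j; rewrite !inE ffunE. by case: (j == i); case: (v.2 j).
Qed.

Lemma flip_inj m (v : twoQ_vert m) : injective (fun i => flip i v).
Proof.
move=> i i' /(congr1 (fun w : twoQ_vert m => w.2 i)); rewrite /= !ffunE eqxx.
case: eqP => // _; by case: (v.2 i).
Qed.

Lemma weight_open m (f : twoQ_vert m -> nat) v :
  weight (open_nbhd (@twoQ_adj m)) f v = \sum_(i < m) f (flip i v).
Proof.
rewrite /weight /open_nbhd.
have -> : [set y | twoQ_adj v y] = [set flip i v | i in [set: 'I_m]].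
  by apply/setP => y; rewrite inE adj_flip.
rewrite big_imset /=; last by move=> i j _ _; apply: flip_inj.
by apply: eq_bigl => i; rewrite inE.
Qed.

Lemma weight_closed m (f : twoQ_vert m -> nat) v :
  weight (closed_nbhd (@twoQ_adj m)) f v = f v + \sum_(i < m) f (flip i v).
Proof.
rewrite -weight_open /weight /closed_nbhd /open_nbhd.
have -> : [set y | (y == v) || twoQ_adj v y] = v |: [set y | twoQ_adj v y].
  by apply/setP => y; rewrite !inE.
rewrite big_setU1 //= inE /twoQ_adj eqxx /=.
rewrite /hcube_adj (_ : [set i | v.2 i != v.2 i] = set0) ?cards0 //. by apply/setP => i; rewrite !inE eqxx. Qed.

Definition enc N (g : nat -> bool) := \sum_(j < N) g j * 2 ^ j.

Lemma encS N g : enc N.+1 g = g 0 + 2 * enc N (fun j => g j.+1).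
Proof.
rewrite /enc big_ord_recl /= expn0 muln1; congr (_ + _).
rewrite big_distrr /=; apply eq_bigr => i _.
by rewrite expnS mulnCA.
Qed.

Lemma enc_lt N g : enc N g < 2 ^ N.
Proof.
elim: N g => [|N IH] g; first by rewrite /enc big_ord0.
rewrite encS expnS. have := IH (fun j => g j.+1).
move: (enc _ _) (2 ^ N) => e P. case: (g 0) => /=; lia.
Qed.

Lemma enc_inj N g h : enc N g = enc N h -> forall j, j < N -> g j = h j.
Proof.
elim: N g h => [|N IH] g h; first by [].
rewrite !encS => E.
have E0 : g 0 = h 0.
  move: E; case: (g 0); case: (h 0) => //= E; lia.
have E1 : enc N (fun j => g j.+1) = enc N (fun j => h j.+1).
  move: E; rewrite E0; lia.
case=> [|j] Hj //. exact: (IH _ _ E1 j Hj).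
Qed.

Lemma geomS N : (\sum_(j < N) 2 ^ j).+1 = 2 ^ N.
Proof.
elim: N => [|N IH]; first by rewrite big_ord0.
rewrite big_ord_recr /= expnS -IH. move: (\sum_(j < N) 2 ^ j) => S. lia.
Qed.

Lemma sum_xor m (b : bool) (p : 'I_m -> bool) :
  \sum_(i < m) (b (+) p i) = if b then m - \sum_(i < m) p i else \sum_(i < m) p i.
Proof.
case: b => //=.
have : \sum_(i < m) (~~ p i : nat) + \sum_(i < m) (p i : nat) = m.
  rewrite -big_split /=.
  rewrite (eq_bigr (fun _ => 1)); last by move=> i _; case: (p i).
  by rewrite sum1_card card_ord.
move: (\sum_(i < m) (~~ p i : nat)) (\sum_(i < m) (p i : nat)) => a c. lia.
Qed.

Lemma bit_arith m c k (z : bool) s :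
  m + c = k.*2.+1 -> c <= 1 -> (s = k \/ s = k.+1) -> s <= m ->
  c * z + (if z then m - s else s) = k + (z (+) (s == k.+1)).
Proof.
move=> Hm Hc Hs Hsm.
have H1 : (k == k.+1) = false by apply/negbTE; rewrite neq_ltn ltnSn.
rewrite -muln2 in Hm. case: Hs => Hs; subst s; rewrite ?eqxx ?H1; case: z => /=; rewrite ?muln1 ?muln0 ?addn0 ?addn1; move: Hc Hm Hsm; clear. all: lia.
Qed.

Lemma wsum_formula m c k (Z : twoQ_vert m -> nat -> bool) (inS : nat -> 'I_m -> bool) :
  m + c = k.*2.+1 -> c <= 1 ->
  (forall v i j, Z (flip i v) j = Z v j (+) inS j i) ->
  (forall j, j < m.+1 -> \sum_(i < m) inS j i = k \/ \sum_(i < m) inS j i = k.+1) ->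
  forall v, c * (enc m.+1 (Z v)).+1 + \sum_(i < m) (enc m.+1 (Z (flip i v))).+1
   = m + c + k * \sum_(j < m.+1) 2 ^ j
     + enc m.+1 (fun j => Z v j (+) (\sum_(i < m) inS j i == k.+1)).
Proof.
move=> Hm Hc Hflip Hs v.
have E : \sum_(i < m) (enc m.+1 (Z (flip i v))).+1
   = m + \sum_(j < m.+1) (\sum_(i < m) (Z v j (+) inS j i : nat)) * 2 ^ j.
  under eq_bigr do rewrite -add1n.
  rewrite big_split /= sum1_card card_ord /enc exchange_big /=; congr (_ + _).
  apply eq_bigr => j _; rewrite big_distrl /=; apply eq_bigr => i _.
  by rewrite Hflip.
rewrite E /enc.
have E2 : c * (\sum_(j < m.+1) Z v j * 2 ^ j).+1 +
    (m + \sum_(j < m.+1) (\sum_(i < m) (Z v j (+) inS j i : nat)) * 2 ^ j)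
  = m + c + \sum_(j < m.+1) (c * Z v j + \sum_(i < m) (Z v j (+) inS j i : nat)) * 2 ^ j.
  rewrite mulnS big_distrr /=.
  under [in RHS]eq_bigr do rewrite mulnDl.
  rewrite big_split /=.
  under [X in _ = _ + (X + _)]eq_bigr do rewrite -mulnA.
  lia.
rewrite E2 -!addnA; congr (_ + (_ + _)).
rewrite big_distrr /= -big_split /=; apply eq_big_seq => j.
rewrite mem_index_enum => _.
rewrite sum_xor (@bit_arith m c k _ _ Hm) //; first by rewrite mulnDl.
exact: Hs (ltn_ord j).
rewrite -[X in _ <= X]card_ord -sum1_card; apply: leq_sum => i _; by case: (inS j i).
Qed.

Lemma card_V m : #|{: bool * {ffun 'I_m -> bool}}| = 2 ^ m.+1.
Proof. by rewrite card_prod card_bool card_ffun card_bool card_ord expnS. Qed.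

Lemma ad_common m c k (Z : twoQ_vert m -> nat -> bool) (inS : nat -> 'I_m -> bool)
   (N : twoQ_vert m -> {set twoQ_vert m}) alpha :
  m + c = k.*2.+1 -> c <= 1 ->
  (forall u v, (forall j, j < m.+1 -> Z u j = Z v j) -> u = v) ->
  (forall v i j, Z (flip i v) j = Z v j (+) inS j i) ->
  (forall j, j < m.+1 -> \sum_(i < m) inS j i = k \/ \sum_(i < m) inS j i = k.+1) ->
  (forall (f : twoQ_vert m -> nat) v, weight N f v = c * f v + \sum_(i < m) f (flip i v)) ->
  alpha = m + c + k * (2 ^ m.+1 - 1) ->
  ad_antimagic_labeling N alpha 1 (fun v => (enc m.+1 (Z v)).+1).
Proof.
move=> Hm Hc Hinj Hflip Hs Hw Ha.
have G : \sum_(j < m.+1) 2 ^ j = 2 ^ m.+1 - 1.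
  rewrite -geomS; lia.
have W v : weight N (fun v => (enc m.+1 (Z v)).+1) v =
   alpha + enc m.+1 (fun j => Z v j (+) (\sum_(i < m) inS j i == k.+1)).
  by rewrite Hw (wsum_formula Hm Hc Hflip Hs) G Ha.
split; [split|split; [by []|split]].
- move=> u v [] /enc_inj H. apply: Hinj => j Hj. exact: H.
- by move=> v; rewrite card_V /= enc_lt.
- move=> u v; rewrite !W => /addnI /enc_inj H.
  apply: Hinj => j Hj. have := H j Hj. exact: addIb.
- move=> v; exists (enc m.+1 (fun j => Z v j (+) (\sum_(i < m) inS j i == k.+1))).
    by rewrite card_V enc_lt.
  by rewrite W muln1.
Qed.

Definition xa m (x : {ffun 'I_m -> bool}) (j : nat) : bool :=
  match insub j : option 'I_m with Some i => x i | None => false end.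

Lemma xa_ord m x (i : 'I_m) : xa x i = x i.
Proof. by rewrite /xa valK. Qed.

Lemma xa_flip m x (i : 'I_m) j : xa (flipx i x) j = xa x j (+) (val i == j).
Proof.
rewrite /xa; case: insubP => [i' _ <-|Hj].
  by rewrite ffunE; case: eqP => [->|Hne]; rewrite ?eqxx ?addbT //;
     rewrite (_ : (val i == val i') = false) ?addbF //; apply/negbTE/eqP => /val_inj /esym.
case: eqP => // E. by move: Hj; rewrite -E ltn_ord.
Qed.

Lemma odd_sum_flip N (a : nat -> bool) (i : nat) :
  odd (\sum_(j < N) (a j (+) (i == (j : nat)) : nat)) = odd (\sum_(j < N) (a j : nat)) (+) (i < N).
Proof.
elim: N => [|N IH]; first by rewrite !big_ord0.
rewrite !big_ord_recr /= !oddD IH !oddb.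
case: (ltngtP i N) => [H|H|->]; rewrite ?eqxx.
- by rewrite ltnS (ltnW H); case: (odd _); case: (a N).
- by rewrite ltnS leqNgt H; case: (odd _); case: (a N).
- by rewrite ltnSn; case: (odd _); case: (a N).
Qed.

Lemma odd_sum_const N (a : nat -> bool) c :
  odd (\sum_(j < N) (a j (+) c : nat)) = odd (\sum_(j < N) (a j : nat)) (+) (odd N && c).
Proof.
elim: N => [|N IH]; first by rewrite !big_ord0.
rewrite !big_ord_recr /= !oddD IH !oddb.
clear IH. by move: (odd (\sum_(j < N) _)) (a N) c (odd N) => [] [] [] [].
Qed.

Section Constr.
Variables m k : nat.
Hypothesis km : k < m.
Hypothesis ke : ~~ odd k.

Definition PT (x : {ffun 'I_m -> bool}) := odd (\sum_(j < k.+1) (xa x j : nat)).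
Definition PT' (x : {ffun 'I_m -> bool}) := odd (\sum_(j < k) (xa x j : nat)).

Definition Zc (v : twoQ_vert m) (j : nat) : bool :=
  if j == m then v.1 (+) PT v.2
  else if j <= k then xa v.2 j (+) v.1 (+) PT v.2
  else xa v.2 j (+) PT' v.2.

Definition inSc (j : nat) (i : 'I_m) : bool :=
  if j == m then i <= k
  else if j <= k then (val i == j) (+) (i <= k)
  else (val i == j) (+) (i < k).

Lemma PT_flip x i : PT (flipx i x) = PT x (+) (i <= k).
Proof.
rewrite /PT. under eq_bigr do rewrite xa_flip. by rewrite odd_sum_flip ltnS.
Qed.

Lemma PT'_flip x i : PT' (flipx i x) = PT' x (+) (i < k).
Proof.
rewrite /PT'. under eq_bigr do rewrite xa_flip. by rewrite odd_sum_flip.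
Qed.

Lemma Zc_flip v i j : Zc (flip i v) j = Zc v j (+) inSc j i.
Proof.
rewrite /Zc /inSc /flip /= PT_flip PT'_flip xa_flip.
case: (j == m); case: (j <= k);
 move: (val i == j) (i <= k) (i < k) (v.1) (PT v.2) (PT' v.2) (xa v.2 j);
 by do 7! case.
Qed.

End Constr.

Lemma sum_const_b a b (t : nat -> bool) (c : bool) :
  (forall i, a <= i < b -> t i = c) -> \sum_(a <= i < b) (t i : nat) = (b - a) * c.
Proof.
move=> H; rewrite (eq_big_nat _ _ (F2 := fun _ => (c : nat))); last by move=> i /H ->.
by rewrite sum_nat_const_nat.
Qed.

Section S.
Variables m k : nat.
Hypothesis km : k < m.
Hypothesis ke : ~~ odd k.

Definition tS (j i : nat) : bool :=
  if j == m then i <= k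
  else if j <= k then (i == j) (+) (i <= k)
  else (i == j) (+) (i < k).

Lemma s_val j : j < m.+1 ->
  \sum_(i < m) @inSc m k j i = k \/ \sum_(i < m) @inSc m k j i = k.+1.
Proof.
move=> Hj.
have -> : \sum_(i < m) (@inSc m k j i : nat) = \sum_(0 <= i < m) (tS j i : nat)
  by rewrite big_mkord.
rewrite /tS; case: eqP => Ejm.
- right. rewrite (big_cat_nat (leq0n k.+1) km) /=.
  rewrite (@sum_const_b 0 k.+1 _ true); last by move=> i /andP[_ H]; rewrite -ltnS.
  rewrite (@sum_const_b k.+1 m _ false); last by move=> i /andP[H _]; apply/negbTE; rewrite -ltnNge.
  lia.
case: (leqP j k) => Hjk.
- left.
  rewrite (big_cat_nat (leq0n j) (leq_trans Hjk (ltnW km))) /=.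
  rewrite (big_cat_nat (leqnSn j) (leq_ltn_trans Hjk km)) /=.
  rewrite (big_cat_nat (Hjk : j.+1 <= k.+1) km) /=.
  rewrite (@sum_const_b 0 j _ true); last first.
    move=> i /andP[_ H]. have -> : (i == j) = false by apply/negbTE; lia.
    have -> : i <= k by lia. by [].
  rewrite (@sum_const_b j j.+1 _ false); last first.
    move=> i /andP[H1 H2]. have -> : (i == j) by apply/eqP; lia.
    have -> : i <= k by lia. by [].
  rewrite (@sum_const_b j.+1 k.+1 _ true); last first.
    move=> i /andP[H1 H2]. have -> : (i == j) = false by apply/negbTE; lia.
    have -> : i <= k by lia. by [].
  rewrite (@sum_const_b k.+1 m _ false); last first.
    move=> i /andP[H1 H2]. have -> : (i == j) = false by apply/negbTE; lia.
    have -> : (i <= k) = false by apply/negbTE; lia. by [].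
  lia.
- right. have Hjm : j < m by lia.
  rewrite (big_cat_nat (leq0n k) (ltnW km)) /=.
  rewrite (big_cat_nat (ltnW Hjk) (ltnW Hjm)) /=.
  rewrite (big_cat_nat (leqnSn j) Hjm) /=.
  rewrite (@sum_const_b 0 k _ true); last first.
    move=> i /andP[_ H]. have -> : (i == j) = false by apply/negbTE; lia.
    have -> : i < k by lia. by [].
  rewrite (@sum_const_b k j _ false); last first.
    move=> i /andP[H1 H2]. have -> : (i == j) = false by apply/negbTE; lia.
    have -> : (i < k) = false by apply/negbTE; lia. by [].
  rewrite (@sum_const_b j j.+1 _ true); last first.
    move=> i /andP[H1 H2]. have -> : (i == j) by apply/eqP; lia.
    have -> : (i < k) = false by apply/negbTE; lia. by [].
  rewrite (@sum_const_b j.+1 m _ false); last first.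
    move=> i /andP[H1 H2]. have -> : (i == j) = false by apply/negbTE; lia.
    have -> : (i < k) = false by apply/negbTE; lia. by [].
  lia.
Qed.
End S.

Section S2.
Variables m k : nat.
Hypothesis km : k < m.
Hypothesis ke : ~~ odd k.

Lemma Zc_low (v : twoQ_vert m) j : j <= k -> Zc k v j = xa v.2 j (+) (v.1 (+) PT k v.2).
Proof.
move=> Hj; rewrite /Zc Hj.
have -> : (j == m) = false by apply/negbTE; lia.
by rewrite addbA.
Qed.

Lemma Zc_b (v : twoQ_vert m) : v.1 = odd (\sum_(j < k.+1) (Zc k v j : nat)).
Proof.
under eq_bigr => j _ do rewrite (Zc_low v (ltn_ord j : (j : nat) <= k)).
rewrite odd_sum_const -/(PT k v.2) /= ke /=.
by case: (v.1); case: (PT k v.2).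
Qed.

Lemma Zc_inj (u v : twoQ_vert m) :
  (forall j, j < m.+1 -> Zc k u j = Zc k v j) -> u = v.
Proof.
move=> H.
have Eb : u.1 = v.1.
  rewrite Zc_b [RHS]Zc_b; congr (odd _); apply: eq_bigr => j _.
  congr nat_of_bool; apply: H; have := ltn_ord j; lia.
have EP : PT k u.2 = PT k v.2.
  have := H m (ltnSn m); rewrite /Zc eqxx Eb.
  by move: (PT k u.2) (PT k v.2) v.1 => [] [] [].
have Elow j : j <= k -> xa u.2 j = xa v.2 j.
  move=> Hj; have := H j (ltac:(lia)); rewrite !Zc_low // Eb EP.
  by move: (xa u.2 j) (xa v.2 j) => [] [] //; case: (v.1 (+) _).
have EP' : PT' k u.2 = PT' k v.2.
  rewrite /PT'; congr (odd _); apply: eq_bigr => j _.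
  congr nat_of_bool; apply: Elow; have := ltn_ord j; lia.
have Ex : u.2 = v.2.
  apply/ffunP => i; rewrite -!xa_ord.
  case: (leqP i k) => Hik; first exact: Elow.
  have := H i (ltac:(have := ltn_ord i; lia)).
  rewrite /Zc (ltn_eqF (ltn_ord i)) leqNgt Hik /= EP'.
  by move: (xa u.2 i) (xa v.2 i) => [] [] //; case: (PT' k v.2).
by case: u v Eb Ex {H EP Elow EP'} => ? ? [? ?] /= -> ->.
Qed.
End S2.

Lemma open_case q :
  distance_antimagic (@twoQ_adj (4*q+1)) (4*q+1 + 0 + (2*q) * (2 ^ (4*q+1).+1 - 1)) 1.
Proof.
have km : 2*q < 4*q+1 by lia.
have ke : ~~ odd (2*q) by rewrite mul2n odd_double.
eexists; apply: (@ad_common (4*q+1) 0 (2*q) (Zc (2*q)) (@inSc _ (2*q))).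
- rewrite -mul2n; lia.
- by [].
- exact: Zc_inj.
- exact: Zc_flip.
- exact: s_val.
- by move=> f v; rewrite weight_open.
- by [].
Qed.

Lemma closed_case q : 0 < q ->
  closed_distance_antimagic (@twoQ_adj (4*q)) (4*q + 1 + (2*q) * (2 ^ (4*q).+1 - 1)) 1.
Proof.
move=> q0.
have km : 2*q < 4*q by lia.
have ke : ~~ odd (2*q) by rewrite mul2n odd_double.
eexists; apply: (@ad_common (4*q) 1 (2*q) (Zc (2*q)) (@inSc _ (2*q))).
- rewrite -mul2n; lia.
- by [].
- exact: Zc_inj.
- exact: Zc_flip.
- exact: s_val.
- by move=> f v; rewrite weight_closed mul1n.
- by [].
Qed.

Lemma closed_case0 :
  closed_distance_antimagic (@twoQ_adj 0) (0 + 1 + 0 * (2 ^ 1 - 1)) 1.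
Proof.
eexists; apply: (@ad_common 0 1 0 (fun v _ => v.1) (fun _ _ => false)).
- by [].
- by [].
- move=> [b x] [b' y] H. have /= -> := H 0 isT. congr pair.
  by apply/ffunP => -[].
- by move=> v i j; rewrite addbF.
- by move=> j _; left; rewrite big_ord0.
- by move=> f v; rewrite weight_closed mul1n.
- by [].
Qed.

Theorem theorem3p11 (n : nat) :
  (n %% 4 = 2 ->
     distance_antimagic (@twoQ_adj n.-1)
       ((n * (2 ^ n + 1)) %/ 2 - 2 ^ n) 1) /\
  (n %% 4 = 1 ->
     closed_distance_antimagic (@twoQ_adj n.-1)
       (((n + 1) * (2 ^ n + 1)) %/ 2 - 2 ^ n) 1).
Proof.
have En := divn_eq n 4. set q := n %/ 4 in En.
split => Hn.
- have -> : n = (4*q+1).+1 by lia.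
  rewrite -pred_Sn.
  suff -> : ((4*q+1).+1 * (2 ^ (4*q+1).+1 + 1)) %/ 2 - 2 ^ (4*q+1).+1
          = 4*q+1 + 0 + (2*q) * (2 ^ (4*q+1).+1 - 1) by exact: open_case.
  have P0 := expn_gt0 2 (4*q+1).+1. move: (2 ^ (4*q+1).+1) P0 => P P0.
  have -> : (4*q+1).+1 * (P + 1) = 2 * ((2*q+1) * (P+1)) by lia.
  rewrite mulKn //. nia.
- case: (posnP q) => [q0|qp].
    have -> : n = 1 by lia.
    exact: closed_case0.
  have -> : n = (4*q).+1 by lia.
  rewrite -pred_Sn.
  suff -> : (((4*q).+1 + 1) * (2 ^ (4*q).+1 + 1)) %/ 2 - 2 ^ (4*q).+1
          = 4*q + 1 + (2*q) * (2 ^ (4*q).+1 - 1) by exact: closed_case.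
  have P0 := expn_gt0 2 (4*q).+1. move: (2 ^ (4*q).+1) P0 => P P0.
  have -> : ((4*q).+1 + 1) * (P + 1) = 2 * ((2*q+1) * (P+1)) by lia.
  rewrite mulKn //. nia.
Qed.
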